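(* For a positive integer $N$, let $\mathcal S_2$ be the set of pairs $(A,B)$ of $3\times 3$ matrices with entries in $[-N,N]\cap\mathbb{Z}$, written \[ A = \begin{pmatrix} a_1 & a_2 & a_3 \\ a_4 & a_5 & a_6 \\ a_7 & a_8 & a_9 \end{pmatrix},\qquad B = \begin{pmatrix} b_1 & b_2 & b_3 \\ b_4 & b_5 & b_6 \\ b_7 & b_8 & b_9 \end{pmatrix}, \] such that $AB=BA$ and the $6\times 4$ matrix \[ M = \begin{pmatrix} -b_2 & a_2 & 0 & 0 \\ b_4 & -a_4 & 0 & 0 \\ 0 & 0 & -b_3 & a_3 \\ 0 & 0 & b_7 & -a_7 \\ b_8 & -a_8 & -b_8 & a_8 \\ -b_6 & a_6 & b_6 & -a_6 \end{pmatrix} \] has rank $2$. Then $|\mathcal S_2|\le CN^{10}$ for an absolute constant $C>0$ and all $N\ge 1$. *)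

(* Defs.v *)
From mathcomp Require Import all_boot all_order all_algebra.
Set Implicit Arguments. Unset Strict Implicit. Unset Printing Implicit Defensive.
Import Order.TTheory GRing.Theory Num.Theory.
Local Open Scope ring_scope.

(* An integer in [-N, N] is encoded by k : 'I_(2N+1), standing for k - N.
   This is a bijection 'I_(2N+1) -> [-N,N] ∩ Z. *)
Definition decode (N : nat) (k : 'I_(N.*2.+1)) : rat := (k%:Z - N%:Z)%:~R.

Definition decode_mx (N : nat) (A : 'M['I_(N.*2.+1)]_3) : 'M[rat]_3 :=
  map_mx (@decode N) A.

Definition ent (A : 'M[rat]_3) (k : nat) : rat :=
  A (inord ((k.-1) %/ 3)) (inord ((k.-1) %% 3)).

Definition Mmat (A B : 'M[rat]_3) : 'M[rat]_(6, 4) :=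
  \matrix_(i < 6, j < 4)
   let a := ent A in let b := ent B in
   match nat_of_ord i, nat_of_ord j with
   | 0, 0 => - b 2 | 0, 1 => a 2
   | 1, 0 => b 4   | 1, 1 => - a 4
   | 2, 2 => - b 3 | 2, 3 => a 3
   | 3, 2 => b 7   | 3, 3 => - a 7
   | 4, 0 => b 8   | 4, 1 => - a 8 | 4, 2 => - b 8 | 4, 3 => a 8
   | 5, 0 => - b 6 | 5, 1 => a 6   | 5, 2 => b 6   | 5, 3 => - a 6
   | _, _ => 0
   end.

Definition S2 (N : nat) : {set 'M['I_(N.*2.+1)]_3 * 'M['I_(N.*2.+1)]_3} :=
  [set AB | let A := decode_mx AB.1 in let B := decode_mx AB.2 in
            (A *m B == B *m A) && (\rank (Mmat A B) == 2%N)].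

(* Main.v *)
Require Import Defs.
From mathcomp Require Import all_boot all_order all_algebra.
From mathcomp Require Import ring lra zify.
Set Implicit Arguments. Unset Strict Implicit. Unset Printing Implicit Defensive.
Import Order.TTheory GRing.Theory Num.Theory.
Local Open Scope ring_scope.
Section Alg.
Variable F : idomainType.
Implicit Types x y z p q r s : F * F.
Definition wedge x y := x.1 * y.2 - x.2 * y.1.
Definition nz x := (x.1 != 0) || (x.2 != 0).

Lemma wedgeC x y : wedge x y = - wedge y x.
Proof. rewrite /wedge; ring. Qed.

Lemma wedge_z x y : ~~ nz x -> wedge x y = 0.
Proof. by rewrite /nz negb_or !negbK => /andP[/eqP h1 /eqP h2]; rewrite /wedge h1 h2; ring. Qed.

Lemma wedge_zr x y : ~~ nz y -> wedge x y = 0.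
Proof. by move=> h; rewrite wedgeC wedge_z ?oppr0. Qed.

Lemma trans_par x y z : nz y -> wedge x y = 0 -> wedge y z = 0 -> wedge x z = 0.
Proof.
move=> hy h1 h2.
have e1 : wedge x y * z.1 + wedge y z * x.1 + wedge z x * y.1 = 0 by rewrite /wedge; ring.
have e2 : wedge x y * z.2 + wedge y z * x.2 + wedge z x * y.2 = 0 by rewrite /wedge; ring.
rewrite h1 h2 !mul0r !add0r in e1 e2.
rewrite wedgeC; apply/eqP; rewrite oppr_eq0.
case/orP: hy => hy.
  by move/eqP: e1; rewrite mulf_eq0 (negPf hy) orbF.
by move/eqP: e2; rewrite mulf_eq0 (negPf hy) orbF.
Qed.

Lemma kill W x : W * x.1 = 0 -> W * x.2 = 0 -> W != 0 -> ~~ nz x.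
Proof.
move=> /eqP h1 /eqP h2 hW; rewrite /nz negb_or !negbK.
by move: h1 h2; rewrite !mulf_eq0 (negPf hW) /= => -> ->.
Qed.

Lemma cyc p q r s : wedge p q = 0 -> wedge q r = 0 -> wedge r s = 0 -> wedge s p = 0 ->
  (2 < nz p + nz q + nz r + nz s)%N ->
  exists2 x, x \in [:: p; q; r; s] & nz x /\ all (fun y => wedge y x == 0) [:: p; q; r; s].
Proof.
move=> hpq hqr hrs hsp.
have pp : forall v, wedge v v = 0 by move=> v; rewrite /wedge; ring.
have wC0 : forall x y, wedge x y = 0 -> wedge y x = 0.
  by move=> x y h; rewrite wedgeC h oppr0.
case Hp: (nz p); case Hq: (nz q); case Hr: (nz r); case Hs: (nz s) => //= _.
- exists q; first by rewrite !inE eqxx orbT.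
  split=> //=; rewrite hpq pp (wC0 _ _ hqr).
  by rewrite (trans_par Hr (wC0 _ _ hrs) (wC0 _ _ hqr)) eqxx.
- exists q; first by rewrite !inE eqxx orbT.
  by split=> //=; rewrite hpq pp (wC0 _ _ hqr) (wedge_z _ (negbT Hs)) eqxx.
- exists p; first by rewrite !inE eqxx.
  by split=> //=; rewrite pp (wC0 _ _ hpq) (wedge_z _ (negbT Hr)) hsp eqxx.
- exists s; first by rewrite !inE eqxx !orbT.
  by split=> //=; rewrite (wC0 _ _ hsp) (wedge_z _ (negbT Hq)) hrs pp eqxx.
- exists r; first by rewrite !inE eqxx !orbT.
  by split=> //=; rewrite hqr pp (wC0 _ _ hrs) (wedge_z _ (negbT Hp)) eqxx.
Qed.

Definition six v2 v3 v4 v6 v7 v8 : seq (F * F) := [:: v2; v3; v4; v6; v7; v8].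

Lemma wC0 x y : wedge x y = 0 -> wedge y x = 0.
Proof. by move=> h; rewrite wedgeC h oppr0. Qed.
Lemma wpp x : wedge x x = 0.
Proof. by rewrite /wedge; ring. Qed.

Lemma main_alg (v2 v3 v4 v6 v7 v8 d1 d2 d3 : F*F) :
 d3.1 = d1.1 + d2.1 -> d3.2 = d1.2 + d2.2 ->
 (wedge v2 v4 != 0 -> [&& ~~ nz v3, ~~ nz v7, ~~ nz v8 & ~~ nz v6]) ->
 (wedge v3 v7 != 0 -> [&& ~~ nz v2, ~~ nz v4, ~~ nz v8 & ~~ nz v6]) ->
 (wedge v8 v6 != 0 -> [&& ~~ nz v2, ~~ nz v4, ~~ nz v3 & ~~ nz v7]) ->
 (forall a c d, a \in [:: v2; v4] -> c \in [:: v3; v7] -> d \in [:: v8; v6] ->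
     nz c -> wedge a d = 0) ->
 (forall a c d, a \in [:: v2; v4] -> c \in [:: v3; v7] -> d \in [:: v8; v6] ->
     nz a -> wedge c d = 0) ->
 wedge d1 v2 + wedge v3 v8 = 0 ->
 - wedge d1 v4 + wedge v6 v7 = 0 ->
 wedge d3 v3 + wedge v2 v6 = 0 ->
 - wedge d3 v7 + wedge v8 v4 = 0 ->
 wedge d2 v6 + wedge v4 v3 = 0 ->
 - wedge d2 v8 + wedge v7 v2 = 0 ->
 (nz v2 + nz v3 + nz v4 + nz v6 + nz v7 + nz v8 <= 2)%N \/
 exists2 x, x \in [:: v2; v3; v4; v6; v7; v8; d1; d3] &
   nz x && all (fun y => wedge y x == 0) [:: v2; v3; v4; v6; v7; v8; d1; d3].
Proof.
move=> e1 e2 H24 H37 H86 F4a F4b C12 C21 C13 C31 C23 C32.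
case: (eqVneq (wedge v2 v4) 0) => [W24|/H24]; last first.
  case/and4P => /negPf h3 /negPf h7 /negPf h8 /negPf h6; left.
  by rewrite h3 h7 h8 h6; case: (nz v2); case: (nz v4).
case: (eqVneq (wedge v3 v7) 0) => [W37|/H37]; last first.
  case/and4P => /negPf h3 /negPf h7 /negPf h8 /negPf h6; left.
  by rewrite h3 h7 h8 h6; case: (nz v3); case: (nz v7).
case: (eqVneq (wedge v8 v6) 0) => [W86|/H86]; last first.
  case/and4P => /negPf h3 /negPf h7 /negPf h8 /negPf h6; left.
  by rewrite h3 h7 h8 h6; case: (nz v8); case: (nz v6).
have Fin : forall x, x \in [:: v2; v3; v4; v6; v7; v8] -> nz x ->
    all (fun y => wedge y x == 0) [:: v2; v3; v4; v6; v7; v8] ->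
    [|| (nz v2 || nz v4) && (nz v3 || nz v7), (nz v2 || nz v4) && (nz v8 || nz v6)
      | (nz v3 || nz v7) && (nz v8 || nz v6)] ->
    exists2 x, x \in [:: v2; v3; v4; v6; v7; v8; d1; d3] &
      nz x && all (fun y => wedge y x == 0) [:: v2; v3; v4; v6; v7; v8; d1; d3].
  move=> x xin nzx /= /and4P [/eqP p2 /eqP p3 /eqP p4 /and3P [/eqP p6 /eqP p7 /andP [/eqP p8 _]]] hg.
  have pr : forall y y', wedge y x = 0 -> wedge y' x = 0 -> wedge y y' = 0.
    by move=> y y' h h'; apply: (trans_par nzx h (wC0 h')).
  have f1 : (nz v2 || nz v4) -> wedge d1 x = 0.
    have h2 : wedge d1 v2 = 0 by move: C12; rewrite (pr _ _ p3 p8) addr0.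
    have h4 : wedge d1 v4 = 0.
      by apply/eqP; rewrite -oppr_eq0; apply/eqP; move: C21; rewrite (pr _ _ p6 p7) addr0.
    by case/orP=> h; [apply: trans_par h h2 p2 | apply: trans_par h h4 p4].
  have f2 : (nz v3 || nz v7) -> wedge d3 x = 0.
    have h3 : wedge d3 v3 = 0 by move: C13; rewrite (pr _ _ p2 p6) addr0.
    have h7 : wedge d3 v7 = 0.
      by apply/eqP; rewrite -oppr_eq0; apply/eqP; move: C31; rewrite (pr _ _ p8 p4) addr0.
    by case/orP=> h; [apply: trans_par h h3 p3 | apply: trans_par h h7 p7].
  have f3 : (nz v8 || nz v6) -> wedge d2 x = 0.
    have h6 : wedge d2 v6 = 0 by move: C23; rewrite (pr _ _ p4 p3) addr0.
    have h8 : wedge d2 v8 = 0.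
      by apply/eqP; rewrite -oppr_eq0; apply/eqP; move: C32; rewrite (pr _ _ p7 p2) addr0.
    by case/orP=> h; [apply: trans_par h h8 p8 | apply: trans_par h h6 p6].
  have lin : wedge d3 x = wedge d1 x + wedge d2 x by rewrite /wedge e1 e2; ring.
  have [q1 q3] : wedge d1 x = 0 /\ wedge d3 x = 0.
    case/or3P: hg => /andP[ha hb].
    - by split; [exact: f1 ha | exact: f2 hb].
    - by split; [apply: f1 | rewrite lin (f1 ha) (f3 hb) addr0].
    - split; last exact: f2 ha.
      by move: lin; rewrite (f2 ha) (f3 hb) addr0 => <-.
  exists x; first by move: xin; rewrite !inE => /or4P[->|->|->|/or3P[->|->|->]]; rewrite ?orbT.
  by rewrite nzx /= p2 p3 p4 p6 p7 p8 q1 q3 eqxx.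
have zer : forall v y, ~~ nz v -> wedge v y = 0 by move=> v y; apply: wedge_z.
case N1: (nz v2 || nz v4); case N2: (nz v3 || nz v7); case N3: (nz v8 || nz v6).
-
  have [x xin nzx] : exists2 x, x \in [:: v2; v4] & nz x.
    by case/orP: N1 => h; [exists v2 | exists v4]; rewrite ?inE ?eqxx ?orbT.
  have [z zin nzz] : exists2 z, z \in [:: v3; v7] & nz z.
    by case/orP: N2 => h; [exists v3 | exists v7]; rewrite ?inE ?eqxx ?orbT.
  have [s sin nzs] : exists2 s, s \in [:: v8; v6] & nz s.
    by case/orP: N3 => h; [exists v8 | exists v6]; rewrite ?inE ?eqxx ?orbT.
  have g1 : forall a, a \in [:: v2; v4] -> wedge a x = 0.
    move=> a; move: xin; rewrite !inE => /orP[] /eqP -> /orP[] /eqP ->;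
      by rewrite ?wpp ?W24 ?(wC0 W24).
  have g3 : forall d, d \in [:: v8; v6] -> wedge d x = 0.
    by move=> d din; apply: wC0; apply: (F4a x z d).
  have g2 : forall c, c \in [:: v3; v7] -> wedge c x = 0.
    move=> c cin; apply: (trans_par nzs (F4b x c s xin cin sin nzx)).
    by apply: g3.
  right; apply: (Fin x).
  - by move: xin; rewrite !inE => /orP[] ->; rewrite ?orbT.
  - exact: nzx.
  - have m2 : v2 \in [:: v2; v4] by rewrite !inE eqxx.
    have m4 : v4 \in [:: v2; v4] by rewrite !inE eqxx orbT.
    have m3 : v3 \in [:: v3; v7] by rewrite !inE eqxx.
    have m7 : v7 \in [:: v3; v7] by rewrite !inE eqxx orbT.
    have m8 : v8 \in [:: v8; v6] by rewrite !inE eqxx.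
    have m6 : v6 \in [:: v8; v6] by rewrite !inE eqxx orbT.
    by rewrite /= (g1 _ m2) (g1 _ m4) (g2 _ m3) (g2 _ m7) (g3 _ m8) (g3 _ m6) eqxx.
  - by rewrite N1 N2.
-
  move/negbT: N3; rewrite negb_or => /andP[z8 z6].
  have a43 : wedge v4 v3 = 0 by move: C23; rewrite (wedge_zr _ z6) add0r.
  have a72 : wedge v7 v2 = 0.
    by move: C32; rewrite (wedge_zr _ z8) oppr0 add0r.
  case: (ltnP 2 (nz v2 + nz v4 + nz v3 + nz v7)) => hc; last first.
    left; move: hc; rewrite (negPf z8) (negPf z6).
    by case: (nz v2); case: (nz v3); case: (nz v4); case: (nz v7).
  right; have [x xin [nzx]] := cyc W24 a43 W37 a72 hc.
  case/and4P=> /eqP q2 /eqP q4 /eqP q3 /andP[/eqP q7 _].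
  have xin' : x \in [:: v2; v3; v4; v6; v7; v8].
    by move: xin; rewrite !inE => /or4P[] ->; rewrite ?orbT.
  have hall : all (fun y => wedge y x == 0) [:: v2; v3; v4; v6; v7; v8].
    by rewrite /= q2 q3 q4 q7 (zer v6 x z6) (zer v8 x z8) !eqxx.
  have hg : [|| (nz v2 || nz v4) && (nz v3 || nz v7), (nz v2 || nz v4) && (nz v8 || nz v6)
      | (nz v3 || nz v7) && (nz v8 || nz v6)].
    by rewrite N1 N2.
  exact: (Fin x xin' nzx hall hg).
-
  move/negbT: N2; rewrite negb_or => /andP[z3 z7].
  have a26 : wedge v2 v6 = 0 by move: C13; rewrite (wedge_zr _ z3) add0r.
  have a84 : wedge v8 v4 = 0.
    by move: C31; rewrite (wedge_zr _ z7) oppr0 add0r.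
  case: (ltnP 2 (nz v2 + nz v4 + nz v8 + nz v6)) => hc; last first.
    left; move: hc; rewrite (negPf z3) (negPf z7).
    by case: (nz v2); case: (nz v6); case: (nz v4); case: (nz v8).
  right; have [x xin [nzx]] := cyc W24 (wC0 a84) W86 (wC0 a26) hc.
  case/and4P=> /eqP q2 /eqP q4 /eqP q8 /andP[/eqP q6 _].
  have xin' : x \in [:: v2; v3; v4; v6; v7; v8].
    by move: xin; rewrite !inE => /or4P[] ->; rewrite ?orbT.
  have hall : all (fun y => wedge y x == 0) [:: v2; v3; v4; v6; v7; v8].
    by rewrite /= q2 q4 q6 q8 (zer v3 x z3) (zer v7 x z7) !eqxx.
  have hg : [|| (nz v2 || nz v4) && (nz v3 || nz v7), (nz v2 || nz v4) && (nz v8 || nz v6)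
      | (nz v3 || nz v7) && (nz v8 || nz v6)].
    by rewrite N1 N3 orbT.
  exact: (Fin x xin' nzx hall hg).
-
  left; move/negbT/norP: N2 => [/negPf -> /negPf ->]; move/negbT/norP: N3 => [/negPf -> /negPf ->].
  by case: (nz v2); case: (nz v4).
-
  move/negbT: N1; rewrite negb_or => /andP[z2 z4].
  have a38 : wedge v3 v8 = 0 by move: C12; rewrite (wedge_zr _ z2) add0r.
  have a67 : wedge v6 v7 = 0.
    by move: C21; rewrite (wedge_zr _ z4) oppr0 add0r.
  case: (ltnP 2 (nz v3 + nz v7 + nz v6 + nz v8)) => hc; last first.
    left; move: hc; rewrite (negPf z2) (negPf z4).
    by case: (nz v3); case: (nz v6); case: (nz v7); case: (nz v8).
  right; have [x xin [nzx]] := cyc W37 (wC0 a67) (wC0 W86) (wC0 a38) hc.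
  case/and4P=> /eqP q3 /eqP q7 /eqP q6 /andP[/eqP q8 _].
  have xin' : x \in [:: v2; v3; v4; v6; v7; v8].
    by move: xin; rewrite !inE => /or4P[] ->; rewrite ?orbT.
  have hall : all (fun y => wedge y x == 0) [:: v2; v3; v4; v6; v7; v8].
    by rewrite /= q3 q6 q7 q8 (zer v2 x z2) (zer v4 x z4) !eqxx.
  have hg : [|| (nz v2 || nz v4) && (nz v3 || nz v7), (nz v2 || nz v4) && (nz v8 || nz v6)
      | (nz v3 || nz v7) && (nz v8 || nz v6)].
    by rewrite N2 N3 !orbT.
  exact: (Fin x xin' nzx hall hg).
- left; move/negbT/norP: N1 => [/negPf -> /negPf ->]; move/negbT/norP: N3 => [/negPf -> /negPf ->].
  by case: (nz v3); case: (nz v7).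
- left; move/negbT/norP: N1 => [/negPf -> /negPf ->]; move/negbT/norP: N2 => [/negPf -> /negPf ->].
  by case: (nz v8); case: (nz v6).
- left; move/negbT/norP: N1 => [/negPf -> /negPf ->]; move/negbT/norP: N2 => [/negPf -> /negPf ->]; move/negbT/norP: N3 => [/negPf -> /negPf ->].
  by [].
Qed.
End Alg.

Definition det3 (F : comNzRingType) (m : nat -> nat -> F) i1 i2 i3 j1 j2 j3 :=
  m i1 j1 * (m i2 j2 * m i3 j3 - m i2 j3 * m i3 j2)
  - m i1 j2 * (m i2 j1 * m i3 j3 - m i2 j3 * m i3 j1)
  + m i1 j3 * (m i2 j1 * m i3 j2 - m i2 j2 * m i3 j1).

Lemma sum3 (V : nmodType) (f : 'I_3 -> V) :
  \sum_i f i = f (inord 0%N) + f (inord 1%N) + f (inord 2%N).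
Proof.
rewrite !big_ord_recr big_ord0 /= add0r.
by congr (f _ + f _ + f _); apply: val_inj; rewrite /= inordK.
Qed.

Lemma inord_eq3 i j : (i < 3)%N -> (j < 3)%N -> ((inord i : 'I_3) == inord j) = (i == j).
Proof. by move=> hi hj; rewrite -val_eqE /= !inordK. Qed.

Lemma det3_unit (S : 'M[rat]_3) :
  det3 (fun i j => S (inord i) (inord j)) 0%N 1%N 2%N 0%N 1%N 2%N != 0 -> S \in unitmx.
Proof.
set d := det3 _ _ _ _ _ _ _ => hd.
pose s i j := S (inord i) (inord j).
pose adjf (i j : nat) : rat := match i, j with
 | 0, 0 => s 1%N 1%N * s 2%N 2%N - s 1%N 2%N * s 2%N 1%N
 | 0, 1 => - (s 0%N 1%N * s 2%N 2%N - s 0%N 2%N * s 2%N 1%N)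
 | 0, 2 => s 0%N 1%N * s 1%N 2%N - s 0%N 2%N * s 1%N 1%N
 | 1, 0 => - (s 1%N 0%N * s 2%N 2%N - s 1%N 2%N * s 2%N 0%N)
 | 1, 1 => s 0%N 0%N * s 2%N 2%N - s 0%N 2%N * s 2%N 0%N
 | 1, 2 => - (s 0%N 0%N * s 1%N 2%N - s 0%N 2%N * s 1%N 0%N)
 | 2, 0 => s 1%N 0%N * s 2%N 1%N - s 1%N 1%N * s 2%N 0%N
 | 2, 1 => - (s 0%N 0%N * s 2%N 1%N - s 0%N 1%N * s 2%N 0%N)
 | 2, 2 => s 0%N 0%N * s 1%N 1%N - s 0%N 1%N * s 1%N 0%N
 | _, _ => 0 end.
have [] // := @mulmx1_unit _ _ S (\matrix_(i, j) (adjf i j / d)).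
apply/matrixP => i j; rewrite -(inord_val i) -(inord_val j).
case: i j => [[|[|[|i]]] Hi] [[|[|[|j]]] Hj] //=;
  rewrite !mxE sum3 !mxE !inordK // inord_eq3 //= /d /det3 /s; field; exact: hd.
Qed.

Lemma minor0 (M : 'M[rat]_(6,4)) i1 i2 i3 j1 j2 j3 : (\rank M <= 2)%N ->
  (i1 < 6)%N -> (i2 < 6)%N -> (i3 < 6)%N -> (j1 < 4)%N -> (j2 < 4)%N -> (j3 < 4)%N ->
  det3 (fun i j => M (inord i) (inord j)) i1 i2 i3 j1 j2 j3 = 0.
Proof.
move=> hr hi1 hi2 hi3 hj1 hj2 hj3; apply/eqP; apply: contraTT hr => hd.
pose f (r : 'I_3) : 'I_6 := inord (nth 0%N [:: i1; i2; i3] r).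
pose g (r : 'I_3) : 'I_4 := inord (nth 0%N [:: j1; j2; j3] r).
have hS : mxsub f g M \in unitmx.
  apply: det3_unit; move: hd; congr (_ != _).
  by rewrite /det3 !mxE /f /g !inordK.
have e : mxsub f g M = mxsub f id 1%:M *m (M *m mxsub id g 1%:M).
  by rewrite mulmx_colsub mulmx1 -mxsub_mul mul1mx.
have := mxrank_unit hS; rewrite e => h3.
have : (3 <= \rank M)%N.
  rewrite -{1}h3; apply: leq_trans (mxrankM_maxr _ _) _; exact: mxrankM_maxl.
by rewrite -ltnNge.
Qed.

Lemma kill2 (W : rat) (x : rat * rat) : W * x.1 = 0 -> W * x.2 = 0 -> nz x -> W = 0.
Proof.
move=> h1 h2 hx; apply/eqP; apply: contraLR hx => hW.
exact: (kill h1 h2 hW).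
Qed.

Lemma kill' (W : rat) (x : rat * rat) : W != 0 -> W * x.1 = 0 -> W * x.2 = 0 -> ~~ nz x.
Proof. by move=> hW h1 h2; apply: kill h1 h2 hW. Qed.

Section Ent.
Variable A : 'M[rat]_3.
Lemma e1 : ent A 1 = A (inord 0%N) (inord 0%N). Proof. by []. Qed.
Lemma e2 : ent A 2 = A (inord 0%N) (inord 1%N). Proof. by []. Qed.
Lemma e3 : ent A 3 = A (inord 0%N) (inord 2%N). Proof. by []. Qed.
Lemma e4 : ent A 4 = A (inord 1%N) (inord 0%N). Proof. by []. Qed.
Lemma e5 : ent A 5 = A (inord 1%N) (inord 1%N). Proof. by []. Qed.
Lemma e6 : ent A 6 = A (inord 1%N) (inord 2%N). Proof. by []. Qed.
Lemma e7 : ent A 7 = A (inord 2%N) (inord 0%N). Proof. by []. Qed.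
Lemma e8 : ent A 8 = A (inord 2%N) (inord 1%N). Proof. by []. Qed.
Lemma e9 : ent A 9 = A (inord 2%N) (inord 2%N). Proof. by []. Qed.
End Ent.

Definition vv (A B : 'M[rat]_3) k : rat * rat := (ent A k, ent B k).
Definition dd (A B : 'M[rat]_3) i j : rat * rat := (ent A i - ent A j, ent B i - ent B j).

Ltac erw := rewrite ?e1 ?e2 ?e3 ?e4 ?e5 ?e6 ?e7 ?e8 ?e9.

Ltac mf hr i1 i2 i3 j1 j2 j3 k1 k2 k3 :=
  move: (@minor0 _ i1 i2 i3 j1 j2 j3 hr isT isT isT isT isT isT)
        (@minor0 _ i1 i2 i3 k1 k2 k3 hr isT isT isT isT isT isT);
  rewrite /det3 /Mmat !mxE !inordK //=; rewrite /wedge /vv /=; erw; lra.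

Lemma bridge (A B : 'M[rat]_3) : A *m B = B *m A -> (\rank (Mmat A B) <= 2)%N ->
 let v := vv A B in
 (nz (v 2%N) + nz (v 3%N) + nz (v 4%N) + nz (v 6%N) + nz (v 7%N) + nz (v 8%N) <= 2)%N \/
 exists2 x, x \in [:: v 2%N; v 3%N; v 4%N; v 6%N; v 7%N; v 8%N; dd A B 1 5; dd A B 1 9] &
   nz x && all (fun y => wedge y x == 0)
     [:: v 2%N; v 3%N; v 4%N; v 6%N; v 7%N; v 8%N; dd A B 1 5; dd A B 1 9].
Proof.
move=> hAB hr v.
have cm : forall i j : nat, (A *m B) (inord i) (inord j) = (B *m A) (inord i) (inord j).
  by move=> i j; rewrite hAB.
apply: (main_alg (d2 := dd A B 5 9)).
- by rewrite /dd /=; ring.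
- by rewrite /dd /=; ring.
- move=> hW; apply/and4P; split; apply: (kill' hW).
  + by mf hr 0%N 1%N 2%N 0%N 1%N 2%N 0%N 1%N 3%N.
  + by mf hr 0%N 1%N 2%N 0%N 1%N 2%N 0%N 1%N 3%N.
  + by mf hr 0%N 1%N 3%N 0%N 1%N 2%N 0%N 1%N 3%N.
  + by mf hr 0%N 1%N 3%N 0%N 1%N 2%N 0%N 1%N 3%N.
  + by mf hr 0%N 1%N 4%N 0%N 1%N 2%N 0%N 1%N 3%N.
  + by mf hr 0%N 1%N 4%N 0%N 1%N 2%N 0%N 1%N 3%N.
  + by mf hr 0%N 1%N 5%N 0%N 1%N 2%N 0%N 1%N 3%N.
  + by mf hr 0%N 1%N 5%N 0%N 1%N 2%N 0%N 1%N 3%N.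
- move=> hW; apply/and4P; split; apply: (kill' hW).
  + by mf hr 2%N 3%N 0%N 0%N 2%N 3%N 1%N 2%N 3%N.
  + by mf hr 2%N 3%N 0%N 0%N 2%N 3%N 1%N 2%N 3%N.
  + by mf hr 2%N 3%N 1%N 0%N 2%N 3%N 1%N 2%N 3%N.
  + by mf hr 2%N 3%N 1%N 0%N 2%N 3%N 1%N 2%N 3%N.
  + by mf hr 2%N 3%N 4%N 0%N 2%N 3%N 1%N 2%N 3%N.
  + by mf hr 2%N 3%N 4%N 0%N 2%N 3%N 1%N 2%N 3%N.
  + by mf hr 2%N 3%N 5%N 0%N 2%N 3%N 1%N 2%N 3%N.
  + by mf hr 2%N 3%N 5%N 0%N 2%N 3%N 1%N 2%N 3%N.
- move=> hW; apply/and4P; split; apply: (kill' hW).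
  + by mf hr 4%N 5%N 0%N 0%N 1%N 2%N 0%N 1%N 3%N.
  + by mf hr 4%N 5%N 0%N 0%N 1%N 2%N 0%N 1%N 3%N.
  + by mf hr 4%N 5%N 1%N 0%N 1%N 2%N 0%N 1%N 3%N.
  + by mf hr 4%N 5%N 1%N 0%N 1%N 2%N 0%N 1%N 3%N.
  + by mf hr 4%N 5%N 2%N 0%N 2%N 3%N 1%N 2%N 3%N.
  + by mf hr 4%N 5%N 2%N 0%N 2%N 3%N 1%N 2%N 3%N.
  + by mf hr 4%N 5%N 3%N 0%N 2%N 3%N 1%N 2%N 3%N.
  + by mf hr 4%N 5%N 3%N 0%N 2%N 3%N 1%N 2%N 3%N.
- move=> a c d; rewrite !inE => /orP[]/eqP-> /orP[]/eqP-> /orP[]/eqP-> hc; apply: kill2 hc.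
  + mf hr 0%N 2%N 4%N 0%N 1%N 2%N 0%N 1%N 3%N.
  + mf hr 0%N 2%N 4%N 0%N 1%N 2%N 0%N 1%N 3%N.
  + mf hr 0%N 2%N 5%N 0%N 1%N 2%N 0%N 1%N 3%N.
  + mf hr 0%N 2%N 5%N 0%N 1%N 2%N 0%N 1%N 3%N.
  + mf hr 0%N 3%N 4%N 0%N 1%N 2%N 0%N 1%N 3%N.
  + mf hr 0%N 3%N 4%N 0%N 1%N 2%N 0%N 1%N 3%N.
  + mf hr 0%N 3%N 5%N 0%N 1%N 2%N 0%N 1%N 3%N.
  + mf hr 0%N 3%N 5%N 0%N 1%N 2%N 0%N 1%N 3%N.
  + mf hr 1%N 2%N 4%N 0%N 1%N 2%N 0%N 1%N 3%N.
  + mf hr 1%N 2%N 4%N 0%N 1%N 2%N 0%N 1%N 3%N.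
  + mf hr 1%N 2%N 5%N 0%N 1%N 2%N 0%N 1%N 3%N.
  + mf hr 1%N 2%N 5%N 0%N 1%N 2%N 0%N 1%N 3%N.
  + mf hr 1%N 3%N 4%N 0%N 1%N 2%N 0%N 1%N 3%N.
  + mf hr 1%N 3%N 4%N 0%N 1%N 2%N 0%N 1%N 3%N.
  + mf hr 1%N 3%N 5%N 0%N 1%N 2%N 0%N 1%N 3%N.
  + mf hr 1%N 3%N 5%N 0%N 1%N 2%N 0%N 1%N 3%N.
- move=> a c d; rewrite !inE => /orP[]/eqP-> /orP[]/eqP-> /orP[]/eqP-> hc; apply: kill2 hc.
  + mf hr 0%N 2%N 4%N 0%N 2%N 3%N 1%N 2%N 3%N.
  + mf hr 0%N 2%N 4%N 0%N 2%N 3%N 1%N 2%N 3%N.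
  + mf hr 0%N 2%N 5%N 0%N 2%N 3%N 1%N 2%N 3%N.
  + mf hr 0%N 2%N 5%N 0%N 2%N 3%N 1%N 2%N 3%N.
  + mf hr 0%N 3%N 4%N 0%N 2%N 3%N 1%N 2%N 3%N.
  + mf hr 0%N 3%N 4%N 0%N 2%N 3%N 1%N 2%N 3%N.
  + mf hr 0%N 3%N 5%N 0%N 2%N 3%N 1%N 2%N 3%N.
  + mf hr 0%N 3%N 5%N 0%N 2%N 3%N 1%N 2%N 3%N.
  + mf hr 1%N 2%N 4%N 0%N 2%N 3%N 1%N 2%N 3%N.
  + mf hr 1%N 2%N 4%N 0%N 2%N 3%N 1%N 2%N 3%N.
  + mf hr 1%N 2%N 5%N 0%N 2%N 3%N 1%N 2%N 3%N.
  + mf hr 1%N 2%N 5%N 0%N 2%N 3%N 1%N 2%N 3%N.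
  + mf hr 1%N 3%N 4%N 0%N 2%N 3%N 1%N 2%N 3%N.
  + mf hr 1%N 3%N 4%N 0%N 2%N 3%N 1%N 2%N 3%N.
  + mf hr 1%N 3%N 5%N 0%N 2%N 3%N 1%N 2%N 3%N.
  + mf hr 1%N 3%N 5%N 0%N 2%N 3%N 1%N 2%N 3%N.
- by move: (cm 0%N 1%N); rewrite !mxE !sum3 /wedge /dd /vv /=; erw; lra.
- by move: (cm 1%N 0%N); rewrite !mxE !sum3 /wedge /dd /vv /=; erw; lra.
- by move: (cm 0%N 2%N); rewrite !mxE !sum3 /wedge /dd /vv /=; erw; lra.
- by move: (cm 2%N 0%N); rewrite !mxE !sum3 /wedge /dd /vv /=; erw; lra.
- by move: (cm 1%N 2%N); rewrite !mxE !sum3 /wedge /dd /vv /=; erw; lra.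
- by move: (cm 2%N 1%N); rewrite !mxE !sum3 /wedge /dd /vv /=; erw; lra.
Qed.

Lemma inv2sum K : \sum_(k < K.+1) (((k.+1)%:R : rat) ^+ 2)^-1 <= 2 - ((K.+1)%:R)^-1.
Proof.
elim: K => [|K IH].
  by rewrite big_ord_recr big_ord0 /= add0r expr1n invr1; lra.
rewrite big_ord_recr /=; apply: le_trans (lerD IH (lexx _)) _.
set a : rat := (K.+1)%:R.
have ha : 0 < a by rewrite ltr0n.
have -> : (K.+2)%:R = a + 1 by rewrite /a -natr1.
rewrite -subr_ge0.
have -> : 2 - (a + 1)^-1 - (2 - a^-1 + ((a + 1) ^+ 2)^-1) = (a * (a + 1) ^+ 2)^-1.
  by field; apply/andP; split; apply: lt0r_neq0; rewrite -?natr1 -?natrD ?ltr0n ?addn_gt0 //; lra.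
by rewrite invr_ge0; apply: mulr_ge0; [exact: ltW | apply: exprn_ge0; lra].
Qed.

Lemma sum_inv2 K (h : 'I_K.+1 -> nat) (C : nat) :
  (forall k : 'I_K.+1, h k * (k.+1) ^ 2 <= C)%N -> (\sum_k h k <= 2 * C)%N.
Proof.
move=> hb; rewrite -(ler_nat rat) natr_sum natrM.
have e : forall k : 'I_K.+1, (h k)%:R <= C%:R * (((k.+1)%:R : rat) ^+ 2)^-1.
  move=> k; rewrite ler_pdivlMr ?exprn_gt0 ?ltr0n //.
  by rewrite -natrX -natrM ler_nat.
apply: le_trans (ler_sum _ (fun k _ => e k)) _.
rewrite -mulr_sumr mulrC ler_wpM2r ?ler0n //.
apply: le_trans (inv2sum K) _.
by rewrite lerBlDr lerDl invr_ge0 ler0n.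
Qed.

Lemma P1_bound (R k : nat) (P : pred 'I_(R.*2.+1)) :
  (0 < R)%N -> (k <= R)%N ->
  (forall c, P c -> absz (c%:Z - R%:Z) * k <= R)%N -> (#|P| * k.+1 <= 6 * R)%N.
Proof.
move=> R0 kR hP; case: k kR hP => [|k] kR hP.
  by apply: leq_trans (leq_mul (max_card P) (leqnn 1)) _; rewrite card_ord; lia.
set q := (R %/ k.+1)%N.
have hq : forall c, P c -> (absz (c%:Z - R%:Z) <= q)%N.
  by move=> c /hP h; rewrite leq_divRL.
have inj : {in P &, injective (fun c : 'I_(R.*2.+1) => (inord (c + q - R) : 'I_(q.*2.+1)))}.
  move=> c c' hc hc' /(congr1 val) /=.
  have := hq _ hc; have := hq _ hc'; have := ltn_ord c; have := ltn_ord c'.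
  move=> l1 l2 h1 h2; rewrite !inordK; [move=> e; apply: val_inj => /=; lia | lia | lia].
have c1 := leq_card_in _ _ inj; rewrite card_ord in c1.
have t1 : (q * k.+1 <= R)%N by apply: leq_divM.
have t2 : (q <= R)%N by apply: leq_div.
by apply: leq_trans (leq_mul c1 (leqnn _)) _; nia.
Qed.

Section Count.
Variable N : nat.
Local Notation n := (N.*2.+1).
Local Notation T := ('M['I_n]_3 * 'M['I_n]_3)%type.

Definition zi (c : 'I_n) : int := c%:Z - N%:Z.
Definition pos (k : nat) : 'I_3 * 'I_3 := (inord ((k.-1) %/ 3), inord ((k.-1) %% 3)).
Definition cv (X : T) k : 'I_n * 'I_n := (X.1 (pos k).1 (pos k).2, X.2 (pos k).1 (pos k).2).
Definition pz (X : T) k : int * int := (zi (cv X k).1, zi (cv X k).2).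
Definition pd (X : T) i j : int * int := ((pz X i).1 - (pz X j).1, (pz X i).2 - (pz X j).2).
Definition wl (X : T) : seq (int * int) :=
  [:: pz X 2%N; pz X 3%N; pz X 4%N; pz X 6%N; pz X 7%N; pz X 8%N; pd X 1%N 5%N; pd X 1%N 9%N].

Lemma zi_inj : injective zi.
Proof. by move=> c c' /addIr /eqP; rewrite eqz_nat => /eqP /val_inj. Qed.

Lemma pz_inj X Y k : pz X k = pz Y k -> cv X k = cv Y k.
Proof.
rewrite /pz; case: (cv X k) (cv Y k) => [a b] [a' b'] /= [/zi_inj -> /zi_inj ->] //.
Qed.

Lemma injX (X Y : T) : (forall k, (0 < k)%N -> (k <= 9)%N -> cv X k = cv Y k) -> X = Y.
Proof.
case: X Y => [A B] [A' B'] h.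
have e : forall i j : 'I_3, A i j = A' i j /\ B i j = B' i j.
  move=> i j; have := h (3 * i + j).+1 isT.
  have hk : (3 * i + j < 9)%N.
    by have := ltn_ord i; have := ltn_ord j; lia.
  move/(_ hk); rewrite /cv /pos /= mulnC divnMDl // modnMDl divn_small // modn_small //.
  by rewrite addn0 !inord_val => -[-> ->].
by congr pair; apply/matrixP => i j; case: (e i j).
Qed.

Definition ir (p : int * int) : rat * rat := (p.1%:~R, p.2%:~R).

Lemma nz_ir p : nz (ir p) = nz p.
Proof. by rewrite /nz /= !intr_eq0. Qed.

Lemma wedge_ir p q : wedge (ir p) (ir q) = (wedge p q)%:~R.
Proof. by rewrite /wedge /= !rmorphB /= !rmorphM. Qed.

Lemma vv_ir (X : T) k : vv (decode_mx X.1) (decode_mx X.2) k = ir (pz X k).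
Proof. by rewrite /vv /ent /decode_mx !mxE. Qed.

Lemma dd_ir (X : T) i j : dd (decode_mx X.1) (decode_mx X.2) i j = ir (pd X i j).
Proof. by rewrite /dd /ir /pd /pz /cv /pos /ent /decode_mx /decode !mxE /= !rmorphB. Qed.

Definition Zc (X : T) := (nz (pz X 2%N) + nz (pz X 3%N) + nz (pz X 4%N) + nz (pz X 6%N) + nz (pz X 7%N) + nz (pz X 8%N) <= 2)%N.
Definition Lp (X : T) (x : int * int) := nz x && all (fun y => wedge y x == 0) (wl X).
Definition Lc (X : T) := has (Lp X) (wl X).

Lemma S2_ZL (X : T) : X \in S2 N -> Zc X || Lc X.
Proof.
rewrite inE => /andP[/eqP hAB /eqP hr].
have := bridge hAB (eq_leq hr); rewrite /= !vv_ir !dd_ir !nz_ir.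
case=> [h|[x xin hx]]; first by rewrite /Zc h.
apply/orP; right.
have xin' : x \in map ir (wl X) := xin.
have hx' : nz x && all (fun y => wedge y x == 0) (map ir (wl X)) := hx.
case/mapP: xin' hx' => p pin -> /andP[nzp hall]; apply/hasP; exists p => //.
rewrite /Lp -nz_ir nzp andTb; apply/allP => y yin.
have := allP hall (ir y) (map_f ir yin).
by rewrite wedge_ir intr_eq0.
Qed.


Definition offd (k : 'I_6) : nat := nth 0%N [:: 2; 3; 4; 6; 7; 8]%N k.
Definition Spq (p q : 'I_6) := [set X : T | [forall k : 'I_6, (k == p) || (k == q) || ~~ nz (pz X (offd k))]].
Definition gpq (p q : 'I_6) (X : T) := (cv X 1%N, cv X 5%N, cv X 9%N, cv X (offd p), cv X (offd q)).

Lemma nz0 (x : int * int) : ~~ nz x -> x = (0, 0).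
Proof. by case: x => a b; rewrite /nz negb_or !negbK => /andP[/eqP /= -> /eqP /= ->]. Qed.

Lemma card_Spq p q : (#|Spq p q| <= n ^ 10)%N.
Proof.
have inj : {in Spq p q &, injective (gpq p q)}.
  move=> X Y; rewrite !inE => /forallP hX /forallP hY e.
  have e1 : cv X 1%N = cv Y 1%N := congr1 (fun t => t.1.1.1.1) e.
  have e5 : cv X 5%N = cv Y 5%N := congr1 (fun t => t.1.1.1.2) e.
  have e9 : cv X 9%N = cv Y 9%N := congr1 (fun t => t.1.1.2) e.
  have ep : cv X (offd p) = cv Y (offd p) := congr1 (fun t => t.1.2) e.
  have eqq : cv X (offd q) = cv Y (offd q) := congr1 (fun t => t.2) e.
  have off : forall k' : 'I_6, cv X (offd k') = cv Y (offd k').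
    move=> k'; case: (eqVneq k' p) => [-> //|kp]; case: (eqVneq k' q) => [-> //|kq].
    have := hX k'; have := hY k'; rewrite (negPf kp) (negPf kq) /= => /nz0 hy /nz0 hx.
    by apply: pz_inj; rewrite hx hy.
  apply: injX => k k0 k9.
  case: k k0 k9 => [|[|[|[|[|[|[|[|[|[|k]]]]]]]]]] //= _ _.
  - by have := off (inord 0); rewrite /offd inordK.
  - by have := off (inord 1); rewrite /offd inordK.
  - by have := off (inord 2); rewrite /offd inordK.
  - by have := off (inord 3); rewrite /offd inordK.
  - by have := off (inord 4); rewrite /offd inordK.
  - by have := off (inord 5); rewrite /offd inordK.
apply: leq_trans (leq_card_in (gpq p q) (Spq p q) inj) _.
by rewrite !card_prod !card_ord; apply: eq_leq; rewrite !expnS expn0 muln1 !mulnA.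
Qed.

Lemma card2_sub (A : {set 'I_6}) : (#|A| <= 2)%N ->
  exists p q, forall k, k \in A -> (k == p) || (k == q).
Proof.
move=> h; case: (set_0Vmem A) => [-> | [p pA]].
  by exists ord0, ord0 => k; rewrite in_set0.
move: h; rewrite (cardsD1 p A) pA add1n ltnS => h.
case: (set_0Vmem (A :\ p)) => [e | [q qA]].
  exists p, p => k kA; case: (eqVneq k p) => //= kp.
  have : k \in A :\ p by rewrite !inE kp kA.
  by rewrite e in_set0.
exists p, q => k kA; case: (eqVneq k p) => //= kp; case: (eqVneq k q) => //= kq.
move: h; rewrite (cardsD1 q) qA add1n ltnS leqn0 cards_eq0 => /eqP e.
have : k \in A :\ p :\ q by rewrite !inE kp kq kA.
by rewrite e in_set0.
Qed.

Lemma Zc_Spq (X : T) : Zc X -> exists p q, X \in Spq p q.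
Proof.
move=> hz; pose A := [set k : 'I_6 | nz (pz X (offd k))].
have hA : (#|A| <= 2)%N.
  rewrite -sum1_card big_mkcond /= !big_ord_recr big_ord0 /= !inE.
  by move: hz; rewrite /Zc /offd /=; case: (nz _); case: (nz _); case: (nz _); case: (nz _); case: (nz _); case: (nz _).
have [p [q hpq]] := card2_sub hA.
exists p, q; rewrite inE; apply/forallP => k.
case hk: (nz (pz X (offd k))); rewrite ?orbT //= orbF.
by apply: hpq; rewrite inE hk.
Qed.

Lemma card_bigcup_le (I : finType) (B : I -> {set T}) :
  (#|\bigcup_i B i| <= \sum_i #|B i|)%N.
Proof.
elim/big_rec2: _ => [|i x y _ h]; first by rewrite cards0.
rewrite cardsU; apply: leq_trans (leq_subr _ _) _.
by rewrite leq_add2l.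
Qed.

Lemma card_Z : (#|[set X : T | Zc X]| <= 36 * n ^ 10)%N.
Proof.
have sub : [set X : T | Zc X] \subset \bigcup_(pq : 'I_6 * 'I_6) Spq pq.1 pq.2.
  apply/subsetP => X; rewrite inE => /Zc_Spq [p [q h]].
  by apply/bigcupP; exists (p, q).
apply: leq_trans (subset_leq_card sub) _.
apply: leq_trans (card_bigcup_le _) _.
have hs : (\sum_(pq : 'I_6 * 'I_6) #|Spq pq.1 pq.2| <= \sum_(pq : 'I_6 * 'I_6) n ^ 10)%N.
  by apply: leq_sum => pq _; exact: card_Spq.
apply: leq_trans hs _.
by rewrite sum_nat_const card_prod !card_ord.
Qed.

Lemma bez (x y : int * int) : nz x -> wedge y x = 0 ->
  y = (((egcdz x.1 x.2).1 * y.1 + (egcdz x.1 x.2).2 * y.2) * (x.1 %/ gcdz x.1 x.2)%Z,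
       ((egcdz x.1 x.2).1 * y.1 + (egcdz x.1 x.2).2 * y.2) * (x.2 %/ gcdz x.1 x.2)%Z).
Proof.
case: x y => [p q] [s t] /= hnz hw.
have g0 : gcdz p q != 0.
  by rewrite gcdz_eq0; move: hnz; rewrite /nz /=; case: (p == 0); case: (q == 0).
case: egcdzP => a b hab _ /=.
have hp : (p %/ gcdz p q)%Z * gcdz p q = p by rewrite divzK // dvdz_gcdl.
have hq : (q %/ gcdz p q)%Z * gcdz p q = q by rewrite divzK // dvdz_gcdr.
rewrite /wedge /= in hw.
congr pair; apply: (mulIf g0).
- rewrite -mulrA hp -hab; move/eqP: hw; rewrite subr_eq0 => /eqP hw.
  have -> : s * (a * p + b * q) = a * s * p + b * (s * q) by ring.
  by rewrite hw; ring.
- rewrite -mulrA hq -hab; move/eqP: hw; rewrite subr_eq0 => /eqP hw.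
  have -> : t * (a * p + b * q) = b * t * q + a * (t * p) by ring.
  by rewrite -hw; ring.
Qed.

Local Notation R := (N.*2).
Local Notation m := (R.*2.+1).
Definition dec (c : 'I_m) : int := c%:Z - R%:Z.
Definition enc (z : int) : 'I_m := inord (absz (z + R%:Z)).

Lemma dec_enc z : (absz z <= R)%N -> dec (enc z) = z.
Proof. by move=> h; rewrite /dec /enc inordK; lia. Qed.

Definition eu (z : int) : bool * 'I_(R.+1) := (z < 0, inord (absz z)).

Lemma eu_inj z z' : (absz z <= R)%N -> (absz z' <= R)%N -> eu z = eu z' -> z = z'.
Proof.
move=> h h' [hs /(congr1 val)]; rewrite /= !inordK ?ltnS // => ha.
by rewrite (intEsign z) (intEsign z') hs ha.
Qed.

Lemma zi_b (c : 'I_n) : (absz (zi c) <= N)%N.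
Proof. by rewrite /zi; have := ltn_ord c; lia. Qed.

Lemma wl_bound (X : T) y : y \in wl X -> (absz y.1 <= R)%N && (absz y.2 <= R)%N.
Proof.
have hz : forall k, (absz (pz X k).1 <= N)%N && (absz (pz X k).2 <= N)%N.
  by move=> k; rewrite /pz /= !zi_b.
have hN : forall k, (absz (pz X k).1 <= R)%N && (absz (pz X k).2 <= R)%N.
  have hNR : (N <= R)%N by rewrite -addnn leq_addr.
  by move=> k; case/andP: (hz k) => h1 h2; apply/andP; split; apply: leq_trans hNR.
have hd : forall i j, (absz (pd X i j).1 <= R)%N && (absz (pd X i j).2 <= R)%N.
  move=> i j; case/andP: (hz i) => h1 h2; case/andP: (hz j) => h3 h4.
  move: h1 h2 h3 h4; rewrite /pd /= => h1 h2 h3 h4; apply/andP; split; lia.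
rewrite /wl !inE => /or4P[/eqP->|/eqP->|/eqP->|/or4P[/eqP->|/eqP->|/eqP->|/orP[/eqP->|/eqP->]]] //.
Qed.

Definition x0 (X : T) := nth (0, 0) (wl X) (find (Lp X) (wl X)).
Definition ee (X : T) := egcdz (x0 X).1 (x0 X).2.
Definition uu (X : T) : int * int :=
  (((x0 X).1 %/ gcdz (x0 X).1 (x0 X).2)%Z, ((x0 X).2 %/ gcdz (x0 X).1 (x0 X).2)%Z).
Definition cc (X : T) (y : int * int) : int := (ee X).1 * y.1 + (ee X).2 * y.2.
Definition wj (X : T) (j : 'I_8) := nth (0, 0) (wl X) j.

Lemma x0P (X : T) : Lc X -> x0 X \in wl X /\ Lp X (x0 X).
Proof. by move=> h; split; [apply: mem_nth; rewrite -has_find | apply: nth_find]. Qed.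

Lemma repr (X : T) y : Lc X -> y \in wl X -> y = (cc X y * (uu X).1, cc X y * (uu X).2).
Proof.
move=> hL yin; have [_ /andP[nzx /allP hall]] := x0P hL.
exact: bez nzx (eqP (hall y yin)).
Qed.

Lemma repr1 (X : T) y : Lc X -> y \in wl X -> y.1 = cc X y * (uu X).1.
Proof. by move=> hL yin; exact: (congr1 fst (repr hL yin)). Qed.
Lemma repr2 (X : T) y : Lc X -> y \in wl X -> y.2 = cc X y * (uu X).2.
Proof. by move=> hL yin; exact: (congr1 snd (repr hL yin)). Qed.

Lemma uu_bound (X : T) : Lc X ->
  [/\ (absz (uu X).1 <= R)%N, (absz (uu X).2 <= R)%N & nz (uu X)].
Proof.
move=> hL; have [xin /andP[nzx _]] := x0P hL.
have e1 := repr1 hL xin; have e2 := repr2 hL xin.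
have /andP[b1 b2] := wl_bound xin.
rewrite e1 abszM in b1; rewrite e2 abszM in b2.
have hc : cc X (x0 X) != 0.
  apply: contraTneq nzx => h0; rewrite /nz e1 e2 h0 !mul0r.
  by rewrite eqxx.
have hc' : (0 < absz (cc X (x0 X)))%N by rewrite absz_gt0.
split.
- exact: leq_trans (leq_pmull _ hc') b1.
- exact: leq_trans (leq_pmull _ hc') b2.
- move: nzx; rewrite /nz e1 e2 !mulf_eq0 !negb_or (negPf hc) /=.
  by case/orP => ->; rewrite ?orbT.
Qed.

Lemma cc_bound (X : T) y : Lc X -> y \in wl X ->
  [/\ (absz (cc X y) <= R)%N, (absz (cc X y) * absz (uu X).1 <= R)%N
    & (absz (cc X y) * absz (uu X).2 <= R)%N].
Proof.
move=> hL yin; have e1 := repr1 hL yin; have e2 := repr2 hL yin.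
have /andP[b1 b2] := wl_bound yin.
rewrite e1 abszM in b1; rewrite e2 abszM in b2.
split => //.
have [_ _] := uu_bound hL; rewrite /nz => /orP[] h.
- have h' : (0 < absz (uu X).1)%N by rewrite absz_gt0.
  exact: leq_trans (leq_pmulr (absz (cc X y)) h') b1.
- have h' : (0 < absz (uu X).2)%N by rewrite absz_gt0.
  exact: leq_trans (leq_pmulr (absz (cc X y)) h') b2.
Qed.

Definition phi (X : T) :=
  (cv X 1%N, ((eu (uu X).1, eu (uu X).2), [ffun j : 'I_8 => enc (cc X (wj X j))])).

Definition P1 (k : 'I_(R.+1)) : {set 'I_m} := [set c | (absz (dec c) * k <= R)%N].
Definition Dp : {set ((bool * 'I_(R.+1)) * (bool * 'I_(R.+1))) * {ffun 'I_8 -> 'I_m}} :=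
  [set s : ((bool * 'I_(R.+1)) * (bool * 'I_(R.+1))) * {ffun 'I_8 -> 'I_m} | [forall j : 'I_8, (s.2 j \in P1 s.1.1.2) && (s.2 j \in P1 s.1.2.2)]].
Definition Dset := setX [set: 'I_n * 'I_n] Dp.

Lemma wj_in (X : T) (j : 'I_8) : wj X j \in wl X.
Proof. by apply: mem_nth; rewrite size_tuple /=; case: j. Qed.

Lemma phi_in (X : T) : Lc X -> phi X \in Dset.
Proof.
move=> hL; rewrite /Dset in_setX in_setT !inE /=; apply/forallP => j; rewrite !inE !ffunE.
have [b0 b1 b2] := cc_bound hL (wj_in X j).
have [u1 u2 _] := uu_bound hL.
by rewrite dec_enc // !inordK ?ltnS // b1 b2.
Qed.

Lemma pd_cancel (p1 p5 q1 q5 : int * int) : p1 = q1 ->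
  (p1.1 - p5.1, p1.2 - p5.2) = (q1.1 - q5.1, q1.2 - q5.2) -> p5 = q5.
Proof.
case: p1 p5 q1 q5 => [a b] [c d] [a' b'] [c' d'] /= [-> ->] [h1 h2].
by congr pair; apply: oppr_inj; [apply: (addrI a') | apply: (addrI b')].
Qed.

Lemma phi_inj : {in [set X | Lc X] &, injective phi}.
Proof.
move=> X Y; rewrite !inE => hX hY e.
have eC : cv X 1%N = cv Y 1%N := congr1 (fun t => t.1) e.
have [uX1 uX2 _] := uu_bound hX; have [uY1 uY2 _] := uu_bound hY.
have eU1 : (uu X).1 = (uu Y).1 by apply: eu_inj uX1 uY1 (congr1 (fun t => t.2.1.1) e).
have eU2 : (uu X).2 = (uu Y).2 by apply: eu_inj uX2 uY2 (congr1 (fun t => t.2.1.2) e).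
have eW : forall j, wj X j = wj Y j.
  move=> j; have := congr1 (fun t => (t.2.2 : {ffun 'I_8 -> 'I_m}) j) e; rewrite /= !ffunE => ej.
  have [bX _ _] := cc_bound hX (wj_in X j); have [bY _ _] := cc_bound hY (wj_in Y j).
  have ec : cc X (wj X j) = cc Y (wj Y j) by rewrite -(dec_enc bX) ej dec_enc.
  by rewrite (repr hX (wj_in X j)) (repr hY (wj_in Y j)) ec eU1 eU2.
have e1 : pz X 1%N = pz Y 1%N by rewrite /pz eC.
have ep : forall k, (k = 2 \/ k = 3 \/ k = 4 \/ k = 6 \/ k = 7 \/ k = 8)%N -> pz X k = pz Y k.
  move=> k hk.
  have H : forall i : nat, (i < 6)%N -> pz X (nth 0%N [:: 2; 3; 4; 6; 7; 8]%N i) = pz Y (nth 0%N [:: 2; 3; 4; 6; 7; 8]%N i).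
    move=> i hi; have := eW (inord i); rewrite /wj /wl inordK; last by apply: leq_trans hi _.
    by case: i hi => [|[|[|[|[|[|i]]]]]].
  by case: hk => [->|[->|[->|[->|[->|->]]]]]; [apply: (H 0%N) | apply: (H 1%N) | apply: (H 2%N) | apply: (H 3%N) | apply: (H 4%N) | apply: (H 5%N)].
have e5 : pz X 5%N = pz Y 5%N.
  have := eW (inord 6); rewrite /wj /wl inordK // => h.
  exact: (pd_cancel e1 h).
have e9 : pz X 9%N = pz Y 9%N.
  have := eW (inord 7); rewrite /wj /wl inordK // => h.
  exact: (pd_cancel e1 h).
apply: injX => k k0 k9; apply: pz_inj.
case: k k0 k9 => [|[|[|[|[|[|[|[|[|[|k]]]]]]]]]] //= _ _; try exact: ep; auto 10.
Qed.

Lemma sum_bool_card (I : finType) (P : pred I) : (\sum_i (P i : nat))%N = #|P|.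
Proof. by rewrite -sum1_card [RHS]big_mkcond /=; apply: eq_bigr => i _; rewrite unfold_in; case: (P i). Qed.

Lemma card_Dp : (#|Dp| <= \sum_(ue : (bool * 'I_(R.+1)) * (bool * 'I_(R.+1)))
                   #|P1 ue.1.2| ^ 4 * #|P1 ue.2.2| ^ 4)%N.
Proof.
have e : #|Dp| = (\sum_(ue : (bool * 'I_(R.+1)) * (bool * 'I_(R.+1)))
                  \sum_(ce : {ffun 'I_8 -> 'I_m}) ((ue, ce) \in Dp : nat))%N.
  rewrite pair_big /= -sum_bool_card; apply: eq_bigr => -[ue ce] _ //.
rewrite e; apply: leq_sum => ue _; rewrite sum_bool_card.
have hE : (fun ce : {ffun 'I_8 -> 'I_m} => (ue, ce) \in Dp) =i ffun_on (P1 ue.1.2 :&: P1 ue.2.2).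
  move=> ce; rewrite [in LHS]unfold_in /= inE /=.
  by apply/forallP/ffun_onP => h j; have := h j; rewrite !inE.
rewrite (eq_card hE).
rewrite card_ffun_on card_ord.
have h1 : (#|P1 ue.1.2 :&: P1 ue.2.2| <= #|P1 ue.1.2|)%N by apply: subset_leq_card; apply: subsetIl.
have h2 : (#|P1 ue.1.2 :&: P1 ue.2.2| <= #|P1 ue.2.2|)%N by apply: subset_leq_card; apply: subsetIr.
rewrite (_ : 8 = 4 + 4)%N // expnD.
by apply: leq_mul; rewrite leq_exp2r.
Qed.

Lemma sumP1 : (\sum_(ue : (bool * 'I_(R.+1)) * (bool * 'I_(R.+1))) #|P1 ue.1.2| ^ 4 * #|P1 ue.2.2| ^ 4
   = (\sum_(x : bool * 'I_(R.+1)) #|P1 x.2| ^ 4) ^ 2)%N.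
Proof.
rewrite expnS expn1 big_distrlr /= pair_big /=.
by apply: eq_bigr => -[x y] _.
Qed.

Lemma sumP1b : (\sum_(x : bool * 'I_(R.+1)) #|P1 x.2| ^ 4 = 2 * \sum_k #|P1 k| ^ 4)%N.
Proof.
rewrite -(pair_big xpredT xpredT (fun (b : bool) (k : 'I_(R.+1)) => #|P1 k| ^ 4)%N) /=.
by rewrite big_bool /= mul2n addnn.
Qed.

Lemma sumP1k : (0 < N)%N -> (\sum_k #|P1 k| ^ 4 <= 2 * (6 * R) ^ 4)%N.
Proof.
move=> N0; apply: sum_inv2 => k.
have hb : (#|P1 k| * k.+1 <= 6 * R)%N.
  apply: P1_bound; first by rewrite double_gt0.
  - by rewrite -ltnS.
  - by move=> c hc; have : c \in P1 k := hc; rewrite inE.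
apply: leq_trans (_ : #|P1 k| ^ 4 * k.+1 ^ 4 <= _)%N.
  by rewrite leq_mul2l leq_pexp2l ?orbT.
by rewrite -expnMn leq_exp2r.
Qed.

Lemma card_L : (0 < N)%N -> (#|[set X : T | Lc X]| <= n ^ 2 * (4 * (6 * R) ^ 4) ^ 2)%N.
Proof.
move=> N0.
rewrite -(card_in_imset phi_inj).
have sub : phi @: [set X : T | Lc X] \subset Dset.
  by apply/subsetP => t /imsetP [X]; rewrite inE => hX ->; apply: phi_in.
apply: leq_trans (subset_leq_card sub) _.
rewrite /Dset cardsX cardsT card_prod !card_ord mulnn leq_mul2l; apply/orP; right.
apply: leq_trans card_Dp _.
rewrite sumP1 sumP1b leq_exp2r // (_ : 4 = 2 * 2)%N // -mulnA leq_mul2l /=.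
exact: sumP1k.
Qed.
End Count.

Local Close Scope ring_scope.

Theorem lemma4p3 :
  exists C : nat, (0 < C)%N /\
    forall N : nat, (1 <= N)%N -> (#|S2 N| <= C * N ^ 10)%N.
Proof.
exists (36 * 3 ^ 10 + 9 * 16 * 12 ^ 8)%N; split.
  by apply: ltn_addr; rewrite muln_gt0 expn_gt0.
move=> N N1.
have sub : S2 N \subset [set X | Zc X] :|: [set X | Lc X].
  by apply/subsetP => X /S2_ZL; rewrite !inE.
apply: leq_trans (subset_leq_card sub) _.
rewrite cardsU; apply: leq_trans (leq_subr _ _) _.
have n3 : (N.*2.+1 <= 3 * N)%N by lia.
rewrite mulnDl; apply: leq_add.
  apply: leq_trans (card_Z N) _.
  rewrite -mulnA leq_mul2l; apply/orP; right.
  by rewrite -expnMn leq_exp2r.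
apply: leq_trans (card_L N1) _.
have e1 : (6 * N.*2 = 12 * N)%N by rewrite -mul2n mulnA.
rewrite e1.
have -> : (9 * 16 * 12 ^ 8 * N ^ 10 = (3 * N) ^ 2 * (4 * (12 * N) ^ 4) ^ 2)%N by ring.
by rewrite leq_mul2r leq_exp2r // n3 orbT.
Qed.
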